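(* Let $U$ be a finite ground set, $\mathcal{M}=\langle U,\mathcal{F}\rangle$ a matroid on $U$ of rank at least $2$, $\lambda\ge 0$, $d$ an $\alpha$-relaxed semi-metric distance on $U$ (for some $\alpha\ge 1$), and $f:2^U\to\mathbb{R}_{\ge 0}$ a non-negative monotone submodular set function. Let $\phi(S)=f(S)+\lambda\, d(S)$. Let $\{x,y\}$ be a pair of distinct elements with $\{x,y\}\in\mathcal{F}$ maximizing $f(\{x,y\})+\lambda d(x,y)$ among all such pairs. Consider the local search algorithm that starts from a basis $S$ of $\mathcal{M}$ containing both $x$ and $y$ and, while there exist $u\in U\setminus S$ and $v\in S$ with $S-v+u\in\mathcal{F}$ and $\phi(S-v+u)>\phi(S)$, replaces $S$ by $S-v+u$; it returns the final $S$. Then the returned set $S$ satisfies $$\phi(S)\;\ge\;\frac{1}{2\alpha^2}\,\phi(O),$$ where $O$ is an optimal solution, i.e. $\phi(O)=\max\{\phi(T): T\in\mathcal{F}\}$.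
   Context: An $\alpha$-relaxed semi-metric distance on $U$ (with $\alpha\ge 1$) is a function $d:U\times U\to\mathbb{R}_{\ge 0}$ with $d(u,v)=d(v,u)$, $d(u,u)=0$, satisfying $d(u,v)\le \alpha\,(d(v,w)+d(w,u))$ for all $u,v,w\in U$. For $S\subseteq U$, $d(S)=\sum_{\{u,v\}\subseteq S,\,u\ne v} d(u,v)$. $f$ is monotone if $f(S)\le f(T)$ for $S\subseteq T$, and submodular if $f(S\cup\{u\})-f(S)\ge f(T\cup\{u\})-f(T)$ for $S\subseteq T$, $u\notin T$. $\mathcal{F}$ is the family of independent sets of the matroid; a basis is a maximal independent set. $S-v+u$ denotes $(S\setminus\{v\})\cup\{u\}$. *)

(* Defs.v *)
From mathcomp Require Import all_boot all_order all_algebra.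
Set Implicit Arguments. Unset Strict Implicit. Unset Printing Implicit Defensive.
Import Order.TTheory GRing.Theory Num.Theory.
Local Open Scope ring_scope.

Section Defs.
Variable U : finType.

Definition is_matroid (F : pred {set U}) : Prop :=
  [/\ F set0,
      (forall A B : {set U}, F B -> A \subset B -> F A) &
      (forall A B : {set U}, F A -> F B -> (#|A| < #|B|)%N ->
         exists2 e, e \in B :\: A & F (e |: A))].

Definition mrank (F : pred {set U}) : nat := \max_(A : {set U} | F A) #|A|.

Definition is_basis (F : pred {set U}) (S : {set U}) : Prop :=
  F S /\ (forall T : {set U}, F T -> S \subset T -> S = T).

Variable R : realFieldType.

Definition relaxed_semimetric (alpha : R) (d : U -> U -> R) : Prop :=
  [/\ forall u v, 0 <= d u v,
      forall u v, d u v = d v u,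
      forall u, d u u = 0 &
      forall u v w, d u v <= alpha * (d v w + d w u)].

(* d(S) = sum over unordered pairs {u,v} of distinct elements of S
   (each unordered pair counted once, via the enumeration order of U). *)
Definition dsum (d : U -> U -> R) (S : {set U}) : R :=
  \sum_(u in S) \sum_(v in S | (enum_rank u < enum_rank v)%N) d u v.

Definition monotone (f : {set U} -> R) : Prop :=
  forall S T : {set U}, S \subset T -> f S <= f T.

Definition submodular (f : {set U} -> R) : Prop :=
  forall (S T : {set U}) (u : U), S \subset T -> u \notin T ->
    f (u |: S) - f S >= f (u |: T) - f T.

Definition phi (f : {set U} -> R) (lam : R) (d : U -> U -> R) (S : {set U}) : R :=
  f S + lam * dsum d S.

Definition swap_step (F : pred {set U}) (Phi : {set U} -> R) (S T : {set U}) : Prop :=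
  exists u v, [/\ u \notin S, v \in S, T = u |: (S :\ v), F T & Phi T > Phi S].

Inductive ls_run (F : pred {set U}) (Phi : {set U} -> R) : {set U} -> {set U} -> Prop :=
| ls_refl S : ls_run F Phi S S
| ls_step S T V : swap_step F Phi S T -> ls_run F Phi T V -> ls_run F Phi S V.

Definition local_opt (F : pred {set U}) (Phi : {set U} -> R) (S : {set U}) : Prop :=
  forall T, ~ swap_step F Phi S T.

End Defs.

(* Main.v *)
Require Import Defs.
From mathcomp Require Import all_boot all_order all_algebra.
From mathcomp Require Import ring lra.
Set Implicit Arguments. Unset Strict Implicit. Unset Printing Implicit Defensive.
Import Order.TTheory GRing.Theory Num.Theory.
Local Open Scope ring_scope.


Section Dist.
Variables (U : finType) (R : realFieldType) (d : U -> U -> R).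
Hypothesis d_ge0 : forall u v, 0 <= d u v.
Hypothesis d_sym : forall u v, d u v = d v u.
Hypothesis d_0 : forall u, d u u = 0.

Definition P (X Y : {set U}) : R := \sum_(u in X) \sum_(v in Y) d u v.

Lemma P_sym (X Y : {set U}) : P X Y = P Y X.
Proof. rewrite /P exchange_big; apply: eq_bigr => u _; apply: eq_bigr => v _; exact: d_sym. Qed.

Lemma P_ge0 (X Y : {set U}) : 0 <= P X Y.
Proof. by apply: sumr_ge0 => u _; apply: sumr_ge0. Qed.

Lemma P_split_l (X Y Z : {set U}) : X \subset Y -> P Y Z = P X Z + P (Y :\: X) Z.
Proof. by move=> sXY; rewrite /P (big_setID X) (setIidPr sXY). Qed.

Lemma P_split_r (X Y Z : {set U}) : X \subset Y -> P Z Y = P Z X + P Z (Y :\: X).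
Proof. by move=> sXY; rewrite P_sym (P_split_l _ sXY) !(P_sym Z). Qed.

Lemma P_mono_l (X Y Z : {set U}) : X \subset Y -> P X Z <= P Y Z.
Proof. by move=> sXY; rewrite (P_split_l Z sXY) lerDl P_ge0. Qed.

Lemma P_mono_r (X Y Z : {set U}) : X \subset Y -> P Z X <= P Z Y.
Proof. by move=> sXY; rewrite !(P_sym Z) P_mono_l. Qed.

Lemma P1l u (Y : {set U}) : P [set u] Y = \sum_(v in Y) d u v.
Proof. by rewrite /P big_set1. Qed.

Lemma P1r u (Y : {set U}) : P Y [set u] = \sum_(v in Y) d v u.
Proof. by rewrite /P; apply: eq_bigr => v _; rewrite big_set1. Qed.

Lemma PU1l u (X Y : {set U}) : u \notin X -> P (u |: X) Y = P [set u] Y + P X Y.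
Proof. by move=> uX; rewrite /P big_setU1 // big_set1. Qed.

Lemma PU1r u (X Y : {set U}) : u \notin X -> P Y (u |: X) = P Y [set u] + P Y X.
Proof. by move=> uX; rewrite !(P_sym Y) PU1l. Qed.

Lemma P11 u v : P [set u] [set v] = d u v.
Proof. by rewrite P1l big_set1. Qed.

Lemma P0l (Y : {set U}) : P set0 Y = 0.
Proof. by rewrite /P big_set0. Qed.

Lemma PU1 u (X : {set U}) : u \notin X -> P (u |: X) (u |: X) = P X X + 2 * P [set u] X.
Proof.
move=> uX; rewrite PU1l // !PU1r // P11 d_0 add0r.
rewrite (P_sym X [set u]); ring.
Qed.

Lemma dsumE (S : {set U}) : 2 * dsum d S = P S S.
Proof.
have E : forall u v, d u v = (if (enum_rank u < enum_rank v)%N then d u v else 0)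
   + (if (enum_rank v < enum_rank u)%N then d v u else 0).
  move=> u v; case: ltngtP => h.
  - by rewrite addr0.
  - by rewrite add0r d_sym.
  - have -> : u = v by apply: enum_rank_inj; apply: val_inj.
    by rewrite d_0 addr0.
have -> : P S S = \sum_(u in S) \sum_(v in S) (if (enum_rank u < enum_rank v)%N then d u v else 0)
   + \sum_(u in S) \sum_(v in S) (if (enum_rank v < enum_rank u)%N then d v u else 0).
  rewrite -big_split /P; apply: eq_bigr => u _; rewrite -big_split.
  by apply: eq_bigr => v _; exact: E.
rewrite [X in _ = _ + X]exchange_big /= /dsum.
rewrite mulr_natl mulr2n; congr (_ + _); apply: eq_bigr => u _; by rewrite big_mkcondr.
Qed.

Lemma PD1 u (X : {set U}) : u \in X -> P X X = P (X :\ u) (X :\ u) + 2 * P [set u] X.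
Proof.
move=> uX; have h : u \notin X :\ u by rewrite setD11.
have e : P [set u] X = P [set u] (X :\ u).
  by rewrite -{1}(setD1K uX) PU1r // P11 d_0 add0r.
by rewrite e -(PU1 h) (setD1K uX).
Qed.

Lemma sum_P1 (X Y : {set U}) : \sum_(u in X) P [set u] Y = P X Y.
Proof. by apply: eq_bigr => u _; rewrite P1l. Qed.

Lemma sum_P1r (X Y : {set U}) : \sum_(u in X) P Y [set u] = P Y X.
Proof. by rewrite P_sym -sum_P1; apply: eq_bigr => u _; rewrite P_sym. Qed.

Variable alpha : R.
Hypothesis tri : forall u v w, d u v <= alpha * (d v w + d w u).

Lemma avg_tri (X : {set U}) t : P X X <= 2 * alpha * (#|X|%:R - 1) * P X [set t].
Proof.
have E1 : P X X = \sum_(u in X) \sum_(v in X :\ u) d u v.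
  apply: eq_bigr => u uX; rewrite (big_setD1 u uX) /= d_0 add0r //.
have E2 : forall u, u \in X -> \sum_(v in X :\ u) d v t = P X [set t] - d u t.
  move=> u uX; rewrite P1r (big_setD1 u uX) /=; ring.
have E3 : forall u, u \in X -> \sum_(v in X :\ u) d t u = (#|X|%:R - 1) * d t u.
  move=> u uX; rewrite sumr_const -[d t u *+ _]mulr_natl; congr (_ * _).
  by rewrite [in RHS](cardsD1 u X) uX add1n -addn1 natrD addrK.
rewrite E1.
apply: (@le_trans _ _ (\sum_(u in X) \sum_(v in X :\ u) alpha * (d v t + d t u))).
  by apply: ler_sum => u _; apply: ler_sum => v _; exact: tri.
rewrite (eq_bigr (fun u => alpha * ((P X [set t] - d u t) + (#|X|%:R - 1) * d t u))); last first.
  move=> u uX; rewrite -mulr_sumr big_split /= E2 // E3 //.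
rewrite -mulr_sumr big_split /= sumrB sumr_const -mulr_sumr.
have -> : \sum_(i in X) d t i = P X [set t] by rewrite P1r; apply: eq_bigr => i _; rewrite d_sym.
have -> : \sum_(i in X) d i t = P X [set t] by rewrite P1r.
rewrite -[P X [set t] *+ _]mulr_natl le_eqVlt; apply/orP; left; apply/eqP; ring.
Qed.

End Dist.


Section Matroid.
Variables (U : finType) (F : pred {set U}).
Hypothesis Fsub : forall A B : {set U}, F B -> A \subset B -> F A.
Hypothesis Faug : forall A B : {set U}, F A -> F B -> (#|A| < #|B|)%N ->
         exists2 e, e \in B :\: A & F (e |: A).

Lemma aug_iter n : forall I K : {set U}, F I -> F K -> (#|I| + n = #|K|)%N ->
  exists I' : {set U}, [/\ I \subset I', I' \subset I :|: K, F I' & #|I'| = #|K|].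
Proof.
elim: n => [|n IH] I K FI FK cIK.
  by exists I; split => //; [exact: subsetUl | rewrite -cIK addn0].
have lt : (#|I| < #|K|)%N by rewrite -cIK addnS ltnS leq_addr.
have [e] := Faug FI FK lt; rewrite inE => /andP [eI eK] Fe.
have c' : (#|e |: I| + n = #|K|)%N by rewrite cardsU1 eI add1n addSn -addnS.
have [I' [s1 s2 FI' cI']] := IH _ _ Fe FK c'.
exists I'; split => //.
  by apply: subset_trans s1; exact: subsetUr.
apply: (subset_trans s2); rewrite subUset subsetUr andbT subUset sub1set.
by rewrite inE eK orbT subsetUl.
Qed.

Lemma aug_le (I K : {set U}) : F I -> F K -> (#|I| <= #|K|)%N ->
  exists I' : {set U}, [/\ I \subset I', I' \subset I :|: K, F I' & #|I'| = #|K|].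
Proof. by move=> FI FK le; apply: (aug_iter (n := #|K| - #|I|)) => //; rewrite subnKC. Qed.

Lemma sym_exch (O S : {set U}) a : F O -> is_basis F S -> a \in O :\: S ->
  exists2 b, b \in S :\: O & F (b |: (O :\ a)) /\ F (a |: (S :\ b)).
Proof.
move=> FO [FS Smax]; rewrite inE => /andP [aS aO].
set Y := [set b in S :\: O | F (b |: (O :\ a))].
set J := S :\: Y.
have claim1 : forall I : {set U}, I \subset (O :\ a) :|: J -> F I -> (#|I| <= #|O :\ a|)%N.
  move=> I sI FI; rewrite leqNgt; apply/negP => lt.
  have [e] := Faug (Fsub FO (subD1set O a)) FI lt.
  rewrite inE => /andP [eOa eI] Fe.
  have := subsetP sI e eI; rewrite inE (negbTE eOa) /= /J inE => /andP [eY eS].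
  move/negP: eY; apply; rewrite /Y inE Fe andbT inE eS andbT.
  apply/negP => eO; move: eOa; rewrite !inE eO andbT.
  case: eqP => [ea|] //= _; by move: aS; rewrite -ea eS.
have FJa : F (a |: J).
  have FJ : F J := Fsub FS (subsetDl S Y).
  have lt : (#|J| <= #|O|)%N.
    apply: leq_trans (claim1 J (subsetUr _ _) FJ) _; exact: subset_leq_card (subD1set O a).
  have [I [sJI sIJO FI cI]] := aug_le FJ FO lt.
  case: (boolP (a \in I)) => aI.
    by apply: Fsub FI _; rewrite subUset sub1set aI sJI.
  have sI : I \subset (O :\ a) :|: J.
    apply/subsetP => x xI; have := subsetP sIJO x xI.
    case/setUP => xO; apply/setUP; first by right.
    left; apply/setD1P; split => //.
    by apply/eqP => xa; move: aI; rewrite -xa xI.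
  have := claim1 I sI FI; rewrite cI (cardsD1 a O) aO add1n ltnn.
  by [].
have aJ : a \notin J by rewrite /J inE (negbTE aS) andbF.
have JS : J \subset S := subsetDl S Y.
have ltJ : (#|J| < #|S|)%N.
  rewrite ltn_neqAle subset_leq_card // andbT; apply/negP => /eqP cJ.
  have JeS : J = S by apply/eqP; rewrite eqEcard JS cJ leqnn.
  have := Smax _ FJa; rewrite JeS => /(_ (subsetUr _ _)) eS.
  by move: aS; rewrite {1}eS setU11.
have le2 : (#|a |: J| <= #|S|)%N by rewrite cardsU1 aJ add1n.
have [I' [s1 s2 FI' cI']] := aug_le FJa FS le2.
have sI' : I' \subset a |: S.
  apply: (subset_trans s2); apply/subsetP => x /setUP [/setU1P [->|xJ] | xS];
    apply/setU1P; [by left | by right; exact: (subsetP JS x xJ) | by right].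
have aI' : a \in I' by apply: (subsetP s1); rewrite setU11.
have : ~~ (S \subset I').
  apply/negP => SI'; have : (#|a |: S| <= #|I'|)%N.
    by apply: subset_leq_card; rewrite subUset sub1set aI' SI'.
  by rewrite cardsU1 aS cI' add1n ltnn.
case/subsetPn => b bS bI'.
have bY : b \in Y.
  apply/negPn/negP => bY; move: bI'; rewrite (subsetP (subset_trans (subsetUr _ _) s1)) //.
  by rewrite /J inE bY bS.
move: (bY); rewrite /Y inE => /andP [bSO Fb].
exists b => //; split => //.
have -> : a |: (S :\ b) = I'.
  apply/eqP; rewrite eq_sym eqEcard; apply/andP; split.
    apply/subsetP => x xI'; have := subsetP sI' x xI'.
    case/setU1P => [-> | xS]; apply/setU1P; [by left | right].
    apply/setD1P; split => //.
    by apply/eqP => xb; move: bI'; rewrite -xb xI'.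
  rewrite cardsU1 !inE negb_and aS orbT cI' (cardsD1 b S) bS add1n.
  by [].
exact: FI'.
Qed.

Lemma exch_map (S : {set U}) n : is_basis F S -> forall O : {set U}, F O -> #|O :\: S| = n ->
  exists pi : U -> U, [/\ {in O :\: S, forall o, pi o \in S :\: O},
     {in O :\: S &, injective pi} & {in O :\: S, forall o, F (o |: (S :\ pi o))}].
Proof.
move=> bS; elim: n => [|n IH] O FO cO.
  have E := cards0_eq cO.
  by exists id; split => x; rewrite E inE.
have : O :\: S != set0 by rewrite -card_gt0 cO.
case/set0Pn => a aOS.
have [b bSO [Fb Fa]] := sym_exch FO bS aOS.
move: (aOS) (bSO); rewrite !inE => /andP [aS aO] /andP [bO bS'].
set O' := b |: (O :\ a).
have EO : O' :\: S = (O :\: S) :\ a.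
  apply/setP => x; rewrite !inE.
  case: (eqVneq x b) => [->|xb]; first by rewrite bS' /= andbF.
  by rewrite /=; case: (x \in S); case: (x != a); case: (x \in O).
have cO' : #|O' :\: S| = n by move: cO; rewrite (cardsD1 a) aOS EO add1n => -[].
have [pi' [pi1 pi2 pi3]] := IH O' Fb cO'.
exists (fun x => if x == a then b else pi' x); split.
- move=> x xOS; case: (eqVneq x a) => [_|xa] //.
  have xO' : x \in O' :\: S by rewrite EO; apply/setD1P.
  have := pi1 x xO'; rewrite !inE negb_or => /andP [/andP [pb pO] pS].
  rewrite pS andbT; apply/negP => pO2; move: pO; rewrite pO2 andbT negbK => /eqP pa.
  by move: aS; rewrite -pa pS.
- move=> x y xOS yOS /=.
  have pib : forall z, z \in O :\: S -> z != a -> pi' z != b.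
    move=> z zOS za; have zO' : z \in O' :\: S by rewrite EO; apply/setD1P.
    by have := pi1 z zO'; rewrite !inE negb_or => /andP [/andP [pb _] _].
  case: (eqVneq x a) => [->|xa]; case: (eqVneq y a) => [->|ya] //.
  + by move=> e; move: (pib y yOS ya); rewrite e eqxx.
  + by move=> e; move: (pib x xOS xa); rewrite e eqxx.
  + by apply: pi2; rewrite EO; apply/setD1P.
- move=> x xOS; case: (eqVneq x a) => [->|xa] //.
  by apply: pi3; rewrite EO; apply/setD1P.
Qed.

End Matroid.


Section Sub.
Variables (U : finType) (R : realFieldType) (f : {set U} -> R).
Hypothesis fsub : submodular f.

Lemma sub_sumU n : forall (S B : {set U}), #|B| = n -> (forall x, x \in B -> x \notin S) ->
  f (B :|: S) - f S <= \sum_(o in B) (f (o |: S) - f S).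
Proof.
elim: n => [|n IH] S B cB dis.
  by rewrite (cards0_eq cB) set0U big_set0 subrr.
have : B != set0 by rewrite -card_gt0 cB.
case/set0Pn => o oB.
have cB' : #|B :\ o| = n by move: cB; rewrite (cardsD1 o) oB add1n => -[].
have dis' : forall x, x \in B :\ o -> x \notin S by move=> x /setD1P [_ /dis].
have IH' := IH S (B :\ o) cB' dis'.
rewrite (big_setD1 o oB) /=.
have EB : B :|: S = o |: ((B :\ o) :|: S) by rewrite setUA setD1K.
have oS : o \notin (B :\ o) :|: S by rewrite in_setU setD11 /= dis.
have h := fsub (subsetUr (B :\ o) S) oS.
rewrite EB; lra.
Qed.

Lemma sub_sumD n : forall (S A : {set U}), #|A| = n -> A \subset S ->
  \sum_(a in A) (f S - f (S :\ a)) <= f S - f (S :\: A).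
Proof.
elim: n => [|n IH] S A cA sAS.
  by rewrite (cards0_eq cA) big_set0 setD0 subrr.
have : A != set0 by rewrite -card_gt0 cA.
case/set0Pn => a aA.
have cA' : #|A :\ a| = n by move: cA; rewrite (cardsD1 a) aA add1n => -[].
have sA'S : A :\ a \subset S by apply: subset_trans sAS; exact: subD1set.
have IH' := IH S (A :\ a) cA' sA'S.
rewrite (big_setD1 a aA) /=.
have aS : a \in S := subsetP sAS a aA.
have sXY : S :\: A \subset S :\ a.
  by apply: setDS; rewrite sub1set.
have aY : a \notin S :\ a by rewrite setD11.
have h := fsub sXY aY.
have E1 : a |: (S :\ a) = S by rewrite setD1K.
have E2 : a |: (S :\: A) = S :\: (A :\ a).
  apply/setP => x; rewrite !inE; case: (eqVneq x a) => [->|xa] /=; first by rewrite aS.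
  by [].
rewrite E1 E2 in h; lra.
Qed.

End Sub.


Lemma run_inv (U : finType) (R : realFieldType) (F : pred {set U}) (Ph : {set U} -> R) S0 S :
  ls_run F Ph S0 S -> F S0 -> [/\ F S, #|S| = #|S0| & Ph S0 <= Ph S].
Proof.
elim=> [T FT | T T' V [u [v [uT vT -> FT' lt]]] _ IH FT]; first by split.
have [FV cV le] := IH FT'; split => //.
  rewrite cV cardsU1 in_setD1 negb_and uT orbT (cardsD1 v T) vT /=.
  by [].
by apply: le_trans le; apply: ltW.
Qed.

Lemma basis_card (U : finType) (F : pred {set U}) S0 T :
  (forall A B : {set U}, F A -> F B -> (#|A| < #|B|)%N -> exists2 e, e \in B :\: A & F (e |: A)) ->
  is_basis F S0 -> F T -> #|T| = #|S0| -> is_basis F T.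
Proof.
move=> Faug [FS0 max] FT cT; split => // T' FT' sTT'.
apply/eqP; rewrite eqEcard sTT' /= leqNgt; apply/negP => lt.
rewrite cT in lt; have [e] := Faug _ _ FS0 FT' lt; rewrite inE => /andP [eS0 _] Fe.
have := max _ Fe (subsetUr _ _) => E; by move: eS0; rewrite {1}E setU11.
Qed.


Unset Implicit Arguments.

Theorem theorem2 (U : finType) (R : realFieldType) (F : pred {set U})
  (alpha lam : R) (d : U -> U -> R) (f : {set U} -> R) (x y : U)
  (S0 S O : {set U}) :
  is_matroid F -> (2 <= mrank F)%N ->
  0 <= lam -> 1 <= alpha -> relaxed_semimetric alpha d ->
  (forall A, 0 <= f A) -> monotone f -> submodular f ->
  x != y -> F [set x; y] ->
  (forall x' y' : U, x' != y' -> F [set x'; y'] ->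
     f [set x'; y'] + lam * d x' y' <= f [set x; y] + lam * d x y) ->
  is_basis F S0 -> x \in S0 -> y \in S0 ->
  ls_run F (phi f lam d) S0 S -> local_opt F (phi f lam d) S ->
  F O -> (forall T, F T -> phi f lam d T <= phi f lam d O) ->
  phi f lam d O / (2 * alpha ^+ 2) <= phi f lam d S.
Proof.
move=> [F0 Fsub Faug] _ lam0 a1 [d0 dsym dd tri] f0 fmono fsub xy Fxy pmax bS0 xS0 yS0
  run lopt FO _.
have a0 : 0 <= alpha by apply: le_trans a1.
have [FS cS leS] := run_inv run (proj1 bS0).
have bS : is_basis F S := basis_card Faug bS0 FS cS.
have PmL := P_mono_l d0. have PmR := P_mono_r d0 dsym.
have Psym := P_sym dsym. have PU1' := PU1 dsym dd. have PD1' := PD1 dsym dd.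
have dsE := dsumE dsym dd. have Pge0 := P_ge0 d0.
have PU1r' := PU1r dsym.
have phiE : forall X, 2 * phi f lam d X = 2 * f X + lam * P d X X.
  by move=> X; rewrite /phi -dsE; ring.
have s2 : [set x; y] \subset S0 by rewrite subUset !sub1set xS0 yS0.
have Pxy : P d [set x; y] [set x; y] = 2 * d x y.
  rewrite PU1' ?P11 ?dd ?add0r // inE; exact: xy.
have pairS : f [set x; y] + lam * d x y <= phi f lam d S.
  apply: le_trans leS; rewrite /phi lerD //; first exact: fmono.
  apply: ler_wpM2l => //.
  have : 2 * dsum d [set x; y] <= 2 * dsum d S0.
    rewrite !dsE; apply: le_trans (PmL _ _ _ s2) _; exact: PmR.
  by rewrite dsE Pxy ler_pM2l.
have [pi [pi1 pi2 pi3]] := exch_map Fsub Faug bS FO (erefl _).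
set B := O :\: S in pi1 pi2 pi3.
have loc : forall o, o \in B -> f (o |: (S :\ pi o)) - f S
    + lam * (P d [set o] S - d o (pi o) - P d [set pi o] S) <= 0.
  move=> o oB.
  have := pi1 o oB; rewrite inE => /andP [sO sS].
  move: (oB); rewrite inE => /andP [oS oO].
  have oS' : o \notin S :\ pi o by rewrite inE negb_and oS orbT.
  have sS' : pi o \notin S :\ pi o by rewrite setD11.
  have hle : phi f lam d (o |: (S :\ pi o)) <= phi f lam d S.
    rewrite leNgt; apply/negP => lt; apply: (lopt (o |: (S :\ pi o))).
    by exists o, (pi o); split => //; apply: pi3.
  have : 2 * phi f lam d (o |: (S :\ pi o)) <= 2 * phi f lam d S by rewrite ler_pM2l.
  rewrite !phiE PU1' // (PD1' _ _ sS).
  have -> : P d [set o] S = d o (pi o) + P d [set o] (S :\ pi o).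
    by rewrite -{1}(setD1K sS) PU1r' // P11.
  nra.
have piS : forall o, o \in B -> pi o \in S.
  by move=> o oB; have := pi1 o oB; rewrite inE => /andP [].
set Ap := pi @: B.
have ApS : Ap \subset S by apply/subsetP => z /imsetP [o oB ->]; exact: piS.
set M := \sum_(o in B) d o (pi o).
have Hsum : \sum_(o in B) (f (o |: (S :\ pi o)) - f S
    + lam * (P d [set o] S - d o (pi o) - P d [set pi o] S)) <= 0.
  by apply: sumr_le0 => o oB; exact: loc.
rewrite big_split /= -mulr_sumr !sumrB sum_P1 in Hsum.
have EAp : \sum_(o in B) P d [set pi o] S = P d Ap S.
  by rewrite -sum_P1 big_imset.
rewrite EAp -/M in Hsum.
have Hf1 : \sum_(o in B) (f (o |: S) - f S) - \sum_(o in B) (f S - f (S :\ pi o))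
    <= \sum_(o in B) f (o |: (S :\ pi o)) - \sum_(o in B) f S.
  rewrite -!sumrB; apply: ler_sum => o oB.
  have oS : o \notin S by move: oB; rewrite inE => /andP [].
  have := fsub _ _ _ (subD1set S (pi o)) oS; lra.
have Hf2 : f O - f S <= \sum_(o in B) (f (o |: S) - f S).
  apply: le_trans (sub_sumU fsub (erefl _) _); last by move=> z; rewrite inE => /andP [].
  have : f O <= f (B :|: S).
    by apply: fmono; apply/subsetP => z zO; rewrite !inE zO andbT; case: (z \in S); rewrite ?orbT.
  lra.
have Hf3 : \sum_(o in B) (f S - f (S :\ pi o)) <= f S.
  rewrite -(big_imset (fun a => f S - f (S :\ a)) pi2) /=.
  apply: le_trans (sub_sumD fsub (erefl _) ApS) _.
  by rewrite lerBlDr lerDl f0.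
have HL : f O - 2 * f S + lam * (P d B S - M - P d Ap S) <= 0 by lra.
have PsL := P_split_l d. have PsR := P_split_r dsym.
set C := O :&: S. set Q := S :\: Ap.
set off := \sum_(o in B) P d (B :\ o) [set pi o].
have CS : C \subset S := subsetIr O S.
have CO : C \subset O := subsetIl O S.
have ApSC : Ap \subset S :\: C.
  apply/subsetP => z /imsetP [o oB ->]; have := pi1 o oB.
  rewrite inE => /andP [nO sS]; by rewrite inE sS andbT inE negb_and nO.
have PBS : P d B C + M + off <= P d B S.
  rewrite (PsR _ _ B CS) -addrA lerD2l.
  apply: le_trans (PmR _ _ _ ApSC); rewrite -sum_P1r // big_imset //= /M /off -big_split /=.
  apply: ler_sum => o oB; rewrite (PsL _ _ [set pi o] (_ : [set o] \subset B)) ?sub1set //.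
  by rewrite P11.
have OCB : O :\: C = B.
  by apply/setP => z; rewrite !inE; case: (z \in S); case: (z \in O).
have SAQ : S :\: Ap = Q by [].
have PO : P d O O = P d C C + 2 * P d B C + P d B B.
  rewrite (PsL _ _ O CO) OCB (PsR _ _ C CO) (PsR _ _ B CO) OCB (Psym C B); ring.
have PS : P d S S = P d Ap Ap + 2 * P d Ap Q + P d Q Q.
  rewrite (PsL _ _ S ApS) (PsR _ _ Ap ApS) (PsR _ _ Q ApS) (Psym Q Ap); ring.
have PAS : P d Ap S = P d Ap Ap + P d Ap Q by rewrite (PsR _ _ Ap ApS).
have CQ : C \subset Q.
  apply/subsetP => z zC; rewrite inE (subsetP CS z zC) andbT.
  apply/negP => zAp; have := subsetP ApSC z zAp; by rewrite inE zC.
have PCQ : P d C C <= P d Q Q.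
  by apply: le_trans (PmL _ _ _ CQ); apply: PmR.
have phS0 : 0 <= phi f lam d S by rewrite /phi addr_ge0 // mulr_ge0 // -(@ler_pM2l _ 2) // mulr0 dsE.
rewrite ler_pdivrMr; last by rewrite mulr_gt0 // exprn_gt0 // (lt_le_trans ltr01 a1).
rewrite -(@ler_pM2l _ 2) // mulrA !phiE PO PS.
have [m2|m2] := eqVneq #|B| 2%N.
  have [o1 [o2 [o12 EB]]] : exists x1 x2, x1 != x2 /\ B = [set x1; x2] by apply/cards2P; rewrite m2.
  have o1B : o1 \in B by rewrite EB !inE eqxx.
  have o2B : o2 \in B by rewrite EB !inE eqxx orbT.
  have b12 : pi o1 != pi o2 by apply/negP => /eqP /(pi2 _ _ o1B o2B) e; move: o12; rewrite e eqxx.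
  have o1n : o1 \notin [set o2] by rewrite inE.
  have b1n : pi o1 \notin [set pi o2] by rewrite inE.
  have EAp2 : Ap = [set pi o1; pi o2] by rewrite /Ap EB imsetU1 imset_set1.
  have Eoff : off = d o2 (pi o1) + d o1 (pi o2).
    have E1 : B :\ o1 = [set o2] by rewrite EB setU1K.
    have E2 : B :\ o2 = [set o1].
      apply/setP => z; rewrite EB !inE; case: (eqVneq z o2) => [->|] /=.
        by rewrite eq_sym (negbTE o12).
      by rewrite orbF.
    by rewrite /off (big_setD1 o1 o1B) /= E1 big_set1 E2 !P11.
  have EBB : P d B B = 2 * d o1 o2 by rewrite EB PU1' // P11 P11 dd add0r.
  have EAA : P d Ap Ap = 2 * d (pi o1) (pi o2) by rewrite EAp2 PU1' // P11 P11 dd add0r.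
  have t1 := tri o1 o2 (pi o2). have t2 := tri o2 (pi o2) (pi o1).
  have t3 := tri o2 o1 (pi o1). have t4 := tri o1 (pi o1) (pi o2).
  have t2' : alpha * d o2 (pi o2) <= alpha * (alpha * (d (pi o2) (pi o1) + d (pi o1) o2)).
    by rewrite ler_wpM2l.
  have t4' : alpha * d o1 (pi o1) <= alpha * (alpha * (d (pi o1) (pi o2) + d (pi o2) o1)).
    by rewrite ler_wpM2l.
  rewrite (dsym o2 o1) in t3.
  rewrite (dsym (pi o2) o1) in t1 t4'.
  rewrite (dsym (pi o2) (pi o1)) in t2'.
  rewrite (dsym (pi o1) o2) in t2' t3.
  have KB2 : P d B B <= (alpha + alpha ^+ 2) * off + alpha ^+ 2 * P d Ap Ap.
    rewrite EBB EAA Eoff expr2. nra.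
  rewrite PAS in HL.
  have h2 : lam * (P d B C + off) <= 2 * f S - f O + lam * (P d Ap Ap + P d Ap Q).
    have : lam * (P d B C + M + off) <= lam * P d B S by rewrite ler_wpM2l.
    lra.
  have [Q0|Qn] := eqVneq Q set0.
    have C0 : C = set0 by apply/eqP; rewrite -subset0 -Q0.
    have OB : O = B by rewrite -OCB C0 setD0.
    have ES : 2 * phi f lam d S = 2 * f S + lam * (P d Ap Ap + 2 * P d Ap Q + P d Q Q).
      by rewrite phiE PS.
    have FB : F [set o1; o2] by rewrite -EB -OB.
    have hp := pmax o1 o2 o12 FB.
    rewrite -EB in hp.
    have PB0 : P d B set0 = 0 by rewrite Psym P0l.
    rewrite C0 P0l EBB /= {1}OB PB0.
    have a2 : 1 <= 2 * alpha ^+ 2.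
      rewrite expr2; have : 1 <= alpha * alpha by rewrite -[1]mulr1 ler_pM.
      move=> h; lra.
    set RS := 2 * f S + _.
    have RS0 : 0 <= RS by rewrite /RS -ES mulr_ge0.
    have : RS <= RS * (2 * alpha ^+ 2) by rewrite ler_peMr.
    rewrite /RS -ES; lra.
  have [t tQ] := set0Pn _ Qn.
  have KA : P d Ap Ap <= 2 * alpha * P d Ap Q.
    have : P d Ap [set t] <= P d Ap Q by apply: PmR; rewrite sub1set.
    rewrite EAA EAp2 PU1l // !P11.
    have := tri (pi o1) (pi o2) t; rewrite (dsym t (pi o1)).
    move=> h1 h3; have h4 := ler_wpM2l a0 h3.
    lra.
  have c2 : 2 <= alpha + alpha ^+ 2.
    rewrite expr2; have : 1 <= alpha * alpha by rewrite -[1]mulr1 ler_pM.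
    move=> h; lra.
  have g1 : 0 <= (alpha + alpha ^+ 2 - 2) * (lam * P d B C) by rewrite mulr_ge0 ?subr_ge0 // mulr_ge0.
  have g2 : (alpha + alpha ^+ 2) * (lam * (P d B C + off))
      <= (alpha + alpha ^+ 2) * (2 * f S - f O + lam * (P d Ap Ap + P d Ap Q)).
    by rewrite ler_wpM2l // addr_ge0 // exprn_ge0.
  have g3 : lam * P d B B <= lam * ((alpha + alpha ^+ 2) * off + alpha ^+ 2 * P d Ap Ap).
    by rewrite ler_wpM2l.
  have g4 : alpha * (lam * P d Ap Ap) <= alpha * (lam * (2 * alpha * P d Ap Q)).
    by rewrite ler_wpM2l // ler_wpM2l.
  have aa : alpha <= alpha ^+ 2 by rewrite expr2 ler_peMr.
  have g5 : 0 <= (alpha ^+ 2 - alpha) * f S by rewrite mulr_ge0 ?subr_ge0.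
  have g6 : 0 <= (alpha + alpha ^+ 2 - 2) * f O by rewrite mulr_ge0 ?subr_ge0.
  have g7 : 0 <= (alpha ^+ 2 - 1) * (lam * P d Q Q).
    by rewrite mulr_ge0 ?subr_ge0 ?mulr_ge0 // (le_trans a1 aa).
  have g8 : 0 <= (alpha ^+ 2 - alpha) * (lam * P d Ap Q) by rewrite mulr_ge0 ?subr_ge0 ?mulr_ge0.
  have g9 : lam * P d C C <= lam * P d Q Q by rewrite ler_wpM2l.
  have g10 : 0 <= lam * P d Q Q by rewrite mulr_ge0.
  have g11 : 0 <= alpha ^+ 2 * (lam * P d Ap Q) by rewrite !mulr_ge0 // exprn_ge0.
  have := f0 O. have := f0 S.
  rewrite expr2 in g1 g2 g3 g5 g6 g7 g8 g11 aa c2 *.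
  lra.
have offge0 : 0 <= off by apply: sumr_ge0 => o _; exact: Pge0.
have KB : P d B B <= 2 * alpha * off.
  have [m0|m0] := posnP #|B|.
    by rewrite (cards0_eq m0) P0l mulr_ge0 // mulr_ge0.
  have [m1|m1] := eqVneq #|B| 1%N.
    have [o Eo] := cards1P (introT eqP m1).
    by rewrite Eo P11 dd mulr_ge0 // mulr_ge0.
  have m3 : (3 <= #|B|)%N.
    by move: m0 m1 m2; case: #|B| => [|[|[|k]]].
  have E : \sum_(o in B) P d (B :\ o) (B :\ o) = (#|B|%:R - 2) * P d B B.
    rewrite (eq_bigr (fun o => P d B B - 2 * P d [set o] B)); last first.
      by move=> o oB; rewrite (PD1' o B oB) addrK.
    rewrite sumrB sumr_const -mulr_sumr sum_P1 -mulr_natl; ring.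
  have Hle : \sum_(o in B) P d (B :\ o) (B :\ o)
      <= \sum_(o in B) 2 * alpha * (#|B|%:R - 2) * P d (B :\ o) [set pi o].
    apply: ler_sum => o oB.
    have := avg_tri dsym dd tri (B :\ o) (pi o).
    have -> : (#|B :\ o|%:R - 1 : R) = #|B|%:R - 2.
      rewrite [in RHS](cardsD1 o B) oB add1n -addn1 natrD; ring.
    by [].
  rewrite E -mulr_sumr -/off in Hle.
  have mpos : (0 : R) < #|B|%:R - 2.
    by rewrite subr_gt0 ltr_nat.
  have : (#|B|%:R - 2) * P d B B <= (#|B|%:R - 2) * (2 * alpha * off).
    apply: (le_trans Hle); rewrite le_eqVlt; apply/orP; left; apply/eqP; ring.
  by rewrite ler_pM2l.
rewrite PAS in HL.
have h1 : lam * P d B B <= lam * (2 * alpha * off) by rewrite ler_wpM2l.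
have h2 : lam * (P d B C + off) <= 2 * f S - f O + lam * (P d Ap Ap + P d Ap Q).
  have : lam * (P d B C + M + off) <= lam * P d B S by rewrite ler_wpM2l.
  lra.
have h3 : 2 * alpha * (lam * (P d B C + off)) <= 2 * alpha * (2 * f S - f O + lam * (P d Ap Ap + P d Ap Q)).
  by rewrite ler_wpM2l // mulr_ge0.
have h4 : lam * P d C C <= lam * P d Q Q by rewrite ler_wpM2l.
have := Pge0 B C. have := Pge0 Ap Ap. have := Pge0 Ap Q. have := Pge0 Q Q. have := Pge0 C C.
have := f0 O. have := f0 S. have := Pge0 B S.
have am : 0 <= alpha - 1 by rewrite subr_ge0.
have e1 : 0 <= (alpha - 1) * (lam * P d B C) by rewrite mulr_ge0 // mulr_ge0.
have e2 : 0 <= (alpha - 1) * f O by rewrite mulr_ge0.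
have e3 : 0 <= alpha * (alpha - 1) * f S by rewrite mulr_ge0 // mulr_ge0.
have e4 : 0 <= (alpha * alpha - 1) * (lam * P d Q Q).
  by rewrite mulr_ge0 ?mulr_ge0 // subr_ge0 -[1]mulr1 ler_pM.
have e5 : 0 <= alpha * (alpha - 1) * (lam * P d Ap Ap) by rewrite !mulr_ge0.
have e6 : 0 <= alpha * (alpha - 1) * (lam * P d Ap Q) by rewrite !mulr_ge0.
have e7 : 0 <= alpha * alpha * (lam * P d Ap Q) by rewrite !mulr_ge0.
have e8 : 0 <= lam * P d Q Q by rewrite mulr_ge0.
rewrite expr2.
lra.
Qed.
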